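(* Let $A$ be a finite alphabet with $|A|=k$, and let $L\subseteq A^*$ be finite and nonempty. Let $\ell$ be the length of the longest word in $L$. Then $1+k(\ell^{1/k}-2)<h(L)\leq \ell+1$.
   Context: For $n\in\mathbb{N}$, $u\sim_n v$ iff $u$ and $v$ have exactly the same (scattered) subwords of length at most $n$. A language $L$ is $n$-PT if it is a union of $\sim_n$-classes, and $h(L)$ is the least $n$ such that $L$ is $n$-PT. *)

(* Defs.v *)
From HB Require Import structures.
From mathcomp Require Import all_boot all_order all_algebra.
From mathcomp Require Import all_classical all_reals all_analysis.
Set Implicit Arguments. Unset Strict Implicit. Unset Printing Implicit Defensive.

(* Words over A are [seq A]; (scattered) subwords are [subseq]. *)

Definition simon_eq (A : finType) (n : nat) (u v : seq A) : Prop :=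
  forall w : seq A, size w <= n -> subseq w u = subseq w v.

Definition is_nPT (A : finType) (n : nat) (L : seq A -> Prop) : Prop :=
  forall u v : seq A, simon_eq n u v -> (L u <-> L v).

Definition is_PT_height (A : finType) (L : seq A -> Prop) (n : nat) : Prop :=
  is_nPT n L /\ forall m, is_nPT m L -> n <= m.

(* Main.v *)
Require Import Defs.
From HB Require Import structures.
From mathcomp Require Import all_boot all_order all_algebra.
From mathcomp Require Import all_classical all_reals all_analysis.
From mathcomp Require Import zify ring lra.
Import Order.TTheory GRing.Theory Num.Theory.

Definition overB {A : finType} (B : {set A}) (w : seq A) := all (fun a => a \in B) w.
Definition univ {A : finType} (B : {set A}) (i : nat) (x : seq A) :=
  forall v, overB B v -> size v <= i -> subseq v x.
Definition NP {A : finType} (B : {set A}) n (w : seq A) :=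
  forall w', overB B w' -> simon_eq n w w' -> size w' <= size w.

Lemma subseq_split {A : eqType} {u x r : seq A} : subseq u (x ++ r) ->
  exists u1 u2, [/\ u = u1 ++ u2, subseq u1 x & subseq u2 r].
Proof.
case/subseqP=> m sz ->.
exists (mask (take (size x) m) x), (mask (drop (size x) m) r).
rewrite -mask_cat ?cat_take_drop ?mask_subseq //.
by rewrite size_takel // sz size_cat leq_addr.
Qed.

Lemma overB_subseq {A : finType} {B : {set A}} {u w : seq A} :
  subseq u w -> overB B w -> overB B u.
Proof. by move=> /mem_subseq sub /allP H; apply/allP => a /sub; apply: H. Qed.

Lemma overB_cat {A : finType} {B : {set A}} (x y : seq A) :
  overB B (x ++ y) = overB B x && overB B y.
Proof. exact: all_cat. Qed.

Lemma simon_sym {A : finType} {n : nat} {u v : seq A} : simon_eq n u v -> simon_eq n v u.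
Proof. by move=> H w Hw; rewrite H. Qed.

Lemma flank_left1 {A : finType} {B : {set A}} {i n : nat} {x r r' : seq A} :
  univ B i x -> overB B x -> overB B r ->
  simon_eq (n - i) r r' -> forall u, size u <= n -> subseq u (x ++ r) -> subseq u (x ++ r').
Proof.
move=> Ux Bx Br Hs u Hu Hsub.
have Bu : overB B u by apply: (overB_subseq Hsub); rewrite overB_cat Bx Br.
have [u1 [u2 [E S1 S2]]] := subseq_split Hsub.
case: (leqP (size u1) i) => Hi.
  rewrite -(cat_take_drop i u); apply: cat_subseq.
    apply: Ux; first exact: overB_subseq (take_subseq _ _) Bu.
    by rewrite size_take; case: ifP => // /negbT; rewrite -leqNgt.
  have Hd : size (drop i u) <= n - i by rewrite size_drop; lia.
  rewrite -(Hs _ Hd).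
  apply: subseq_trans S2.
  rewrite E drop_cat ltnNge Hi /=; exact: drop_subseq.
rewrite E; apply: cat_subseq => //.
have Hd : size u2 <= n - i by move: Hu; rewrite E size_cat; lia.
by rewrite -(Hs _ Hd).
Qed.

Lemma flank_left {A : finType} {B : {set A}} i n x r r' :
  univ B i x -> overB B x -> overB B r -> overB B r' ->
  simon_eq (n - i) r r' -> simon_eq n (x ++ r) (x ++ r').
Proof.
move=> Ux Bx Br Br' Hs u Hu; apply/idP/idP.
  exact: (flank_left1 Ux Bx Br Hs u Hu).
exact: (flank_left1 Ux Bx Br' (simon_sym Hs) u Hu).
Qed.

Lemma univ_rev {A : finType} {B : {set A}} i y : univ B i y -> univ B i (rev y).
Proof.
move=> U v Bv Hv; rewrite -subseq_rev revK; apply: U.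
  by rewrite /overB all_rev.
by rewrite size_rev.
Qed.

Lemma flank_right {A : finType} {B : {set A}} j n y r r' :
  univ B j y -> overB B y -> overB B r -> overB B r' ->
  simon_eq (n - j) r r' -> simon_eq n (r ++ y) (r' ++ y).
Proof.
move=> Uy By Br Br' Hs u Hu.
rewrite -(subseq_rev u) -[subseq u _](subseq_rev u) !rev_cat.
apply: (@flank_left _ B j n (rev y) (rev r) (rev r')).
- exact: univ_rev.
- by rewrite /overB all_rev.
- by rewrite /overB all_rev.
- by rewrite /overB all_rev.
- move=> w Hw; rewrite -[w]revK !subseq_rev; apply: Hs; by rewrite size_rev.
- by rewrite size_rev.
Qed.

Lemma univ0 {A : finType} {B : {set A}} (x : seq A) : univ B 0 x.
Proof. by move=> [|c v] //=; rewrite sub0seq. Qed.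

Lemma univ_mono {A : finType} {B : {set A}} {i : nat} {x y : seq A} :
  univ B i x -> subseq x y -> univ B i y.
Proof. by move=> U S v Bv Hv; apply: subseq_trans (U v Bv Hv) S. Qed.

Lemma univ_r {A : finType} {B : {set A}} {i : nat} {x r : seq A} :
  univ B i x -> {subset B <= r} -> univ B i.+1 (x ++ r).
Proof.
move=> U S v Bv Hv; rewrite -(cat_take_drop i v); apply: cat_subseq.
  apply: U; first exact: overB_subseq (take_subseq _ _) Bv.
  by rewrite size_take; case: ifP => // /negbT; rewrite -leqNgt.
have: size (drop i v) <= 1 by rewrite size_drop; lia.
have Bd : overB B (drop i v) by exact: overB_subseq (drop_subseq _ _) Bv.
case: (drop i v) Bd => [|c [|d t]] //=; first by rewrite sub0seq.
by rewrite andbT sub1seq => /S.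
Qed.

Lemma univ_l {A : finType} {B : {set A}} {i : nat} {x r : seq A} :
  univ B i x -> {subset B <= r} -> univ B i.+1 (r ++ x).
Proof.
move=> U S v Bv Hv; rewrite -(cat_take_drop 1 v); apply: cat_subseq; last first.
  apply: U; first exact: overB_subseq (drop_subseq _ _) Bv.
  by rewrite size_drop; lia.
case: v Bv Hv => [|c t] //=; first by rewrite sub0seq.
by rewrite take0 sub1seq => /andP[/S].
Qed.

Lemma univ_pump {A : finType} {B : {set A}} {n : nat} {x y y' : seq A} :
  univ B n x -> overB B (x ++ y) -> overB B (x ++ y') ->
  simon_eq n (x ++ y) (x ++ y').
Proof.
move=> U B1 B2 u Hu; apply/idP/idP => S.
  apply: subseq_trans (prefix_subseq _ _); apply: U => //; exact: overB_subseq S B1.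
apply: subseq_trans (prefix_subseq _ _); apply: U => //; exact: overB_subseq S B2.
Qed.

Definition archw {A : Type} (pb : seq A * A) := rcons pb.1 pb.2.
Definition arch_ok {A : finType} (B : {set A}) (pb : seq A * A) :=
  [&& pb.2 \in B, overB (B :\ pb.2) pb.1 & B \subset [set a in rcons pb.1 pb.2]].

Lemma overB_sub {A : finType} {B C : {set A}} {w : seq A} :
  C \subset B -> overB C w -> overB B w.
Proof. by move=> /fintype.subsetP S /allP H; apply/allP => a /H /S. Qed.

Lemma overB_arch {A : finType} {B : {set A}} pb : arch_ok B pb -> overB B (archw pb).
Proof.
case/and3P=> b1 b2 _; rewrite /archw -cats1 overB_cat /= b1 andbT.
rewrite andbT; exact: (overB_sub (subsetDl B [set pb.2]) b2).
Qed.

Lemma overB_flat {A : finType} {B : {set A}} rs : all (arch_ok B) rs ->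
  overB B (flatten (map archw rs)).
Proof.
elim: rs => //= pb rs IH /andP[h t]; rewrite overB_cat overB_arch //; exact: IH.
Qed.

Lemma arch_sub {A : finType} {B : {set A}} pb : arch_ok B pb -> {subset B <= archw pb}.
Proof. by case/and3P=> _ _ /fintype.subsetP S a /S; rewrite inE. Qed.

Lemma univ_flat {A : finType} {B : {set A}} rs : all (arch_ok B) rs ->
  univ B (size rs) (flatten (map archw rs)).
Proof.
elim: rs => [|pb rs IH] /=; first by move=> _; apply: univ0.
by move=> /andP[h t]; apply: univ_l (IH t) (arch_sub _ h).
Qed.

Lemma decomp {A : finType} {B : {set A}} (b0 : A) (w : seq A) :
  b0 \in B -> overB B w -> exists rs s c,
  [/\ w = flatten (map archw rs) ++ s, all (arch_ok B) rs, c \in B & overB (B :\ c) s].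
Proof.
move=> b0B; have [N] := ubnP (size w); elim: N w => // N IH w HN Bw.
case: (boolP [forall c in B, c \in w]) => [/forall_inP Hall | /forall_inPn [c cB cnw]];
  last first.
  exists [::], w, c; split => //.
  apply/allP => a aw; rewrite !inE (allP Bw _ aw) andbT.
  by apply: contraNneq cnw => <-.
case: (@arg_maxnP _ b0 (fun c => c \in B) (fun c => index c w) b0B) => b bB bmax.
set i := index b w.
have bw : b \in w by apply: Hall.
have iw : i < size w by rewrite index_mem.
have Ew : w = rcons (take i w) b ++ drop i.+1 w.
  by rewrite cat_rcons -(nth_index b bw) -drop_nth // cat_take_drop.
have Hrest : size (drop i.+1 w) < N.
  by rewrite size_drop; lia.
have Brest : overB B (drop i.+1 w) by exact: overB_subseq (drop_subseq _ _) Bw.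
have [rs [s [c [E1 E2 E3 E4]]]] := IH _ Hrest Brest.
exists ((take i w, b) :: rs), s, c; split => //.
  by rewrite /= -catA -E1 {1}Ew.
rewrite /= E2 andbT /arch_ok /= bB /=; apply/andP; split.
  apply/allP => a at_; rewrite !inE.
  have aw : a \in w by exact: (mem_subseq (take_subseq w i) at_).
  rewrite (allP Bw _ aw) andbT.
  apply/eqP => ab; by move: at_; rewrite ab in_take // ltnn.
apply/fintype.subsetP => a aB; rewrite inE mem_rcons inE.
case: eqVneq => //= ab.
have aw := Hall a aB.
rewrite in_take //.
have le : index a w <= i := bmax a aB.
rewrite ltn_neqAle le andbT; apply/eqP => Hi.
by move: ab; rewrite -(nth_index b aw) Hi nth_index // eqxx.
Qed.

Local Open Scope ring_scope.
Definition bnd (R : realType) (k n : nat) : R := ((n%:R - 1) / k%:R + 2) ^+ k.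

Lemma bern {R : realFieldType} (t : R) n : -1 <= t -> 1 + n%:R * t <= (1 + t) ^+ n.
Proof.
move=> ht; elim: n => [|n IH]; first by rewrite mul0r addr0 expr0.
rewrite exprS; have h1 : 0 <= 1 + t by lra.
apply: le_trans (ler_wpM2l h1 IH).
have hn : 0 <= n%:R :> R by apply: ler0n.
rewrite -[n.+1]addn1 natrD; nra.
Qed.

Lemma amgm {R : realFieldType} (x y : R) k : 0 <= x -> 0 < y ->
  x * y ^+ k <= ((x + k%:R * y) / k.+1%:R) ^+ k.+1.
Proof.
move=> hx hy.
have hk : k.+1%:R != 0 :> R by rewrite pnatr_eq0.
have hy0 : y != 0 by rewrite gt_eqF.
set u := (x + k%:R * y) / k.+1%:R / y.
have hu0 : 0 <= u.
  rewrite /u; apply: divr_ge0; last exact: ltW.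
  apply: divr_ge0; last exact: ler0n.
  by apply: addr_ge0 => //; apply: mulr_ge0; [apply: ler0n | apply: ltW].
have hb := @bern R (u - 1) k.+1 (ltac:(lra)).
have E : 1 + k.+1%:R * (u - 1) = x / y.
  rewrite /u; field; rewrite hy0 /=; rewrite -natr1 addrC in hk; exact: hk.
have E2 : (x + k%:R * y) / k.+1%:R = u * y by rewrite /u divfK.
rewrite E2 exprMn.
have -> : x * y ^+ k = (x / y) * y ^+ k.+1 by rewrite exprS mulrA divfK.
apply: ler_wpM2r; first by apply: exprn_ge0; apply: ltW.
rewrite -E; move: hb; have -> : 1 + (u - 1) = u by ring. by [].
Qed.

Lemma base_ge0 {R : realType} k n : 0 <= (n%:R - 1) / k%:R + 2 :> R.
Proof.
case: k => [|k]; first by rewrite invr0 mulr0 add0r.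
have hk : 0 < k.+1%:R :> R by apply: ltr0Sn.
have h : -1 <= (n%:R - 1) / k.+1%:R :> R.
  rewrite ler_pdivlMr //. have h1 := ler0n R n. have h2 : 1 <= k.+1%:R :> R by rewrite ler1n.
  lra.
set z := (_ / _) in h *; lra.
Qed.

Lemma bnd_ge1 {R : realType} k n : 1 <= bnd R k n.
Proof.
rewrite /bnd; apply: exprn_ege1.
case: k => [|k]; first by rewrite invr0 mulr0 add0r; lra.
have hk : 0 < k.+1%:R :> R by apply: ltr0Sn.
have h : -1 <= (n%:R - 1) / k.+1%:R :> R.
  rewrite ler_pdivlMr //. have h1 := ler0n R n. have h2 : 1 <= k.+1%:R :> R by rewrite ler1n.
  lra.
set z := (_ / _) in h *; lra.
Qed.

Lemma bnd_mono {R : realType} k n : bnd R k n <= bnd R k n.+1.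
Proof.
rewrite /bnd; apply: lerXn2r; rewrite ?nnegrE ?base_ge0 //.
rewrite lerD2r; apply: ler_wpM2r; first by rewrite invr_ge0 ler0n.
by rewrite lerD2r ler_nat.
Qed.

Lemma bnd_step {R : realType} k n m : (m < n)%N ->
  (m.+1%:R : R) * bnd R k (n - m + 1) <= bnd R k.+1 n.
Proof.
move=> mn; rewrite /bnd.
have ypos : 0 < ((n - m + 1)%:R - 1) / k%:R + 2 :> R.
  case: k => [|k]; first by rewrite invr0 mulr0 add0r; lra.
  have hk : 0 < k.+1%:R :> R by apply: ltr0Sn.
  have h : 0 <= ((n - m + 1)%:R - 1) / k.+1%:R :> R.
    apply: divr_ge0; last exact: ltW. rewrite natrD; have := ler0n R (n - m); lra.
  set z := (_ / _) in h *; lra.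
apply: le_trans (amgm (m.+1%:R) _ k (ler0n _ _) ypos) _.
apply: lerXn2r; rewrite ?nnegrE ?base_ge0 //.
have hk : 0 < k.+1%:R :> R by apply: ltr0Sn.
rewrite (_ : (n%:R - 1) / k.+1%:R + 2 = (n%:R - 1 + 2 * k.+1%:R) / k.+1%:R); last first.
  by field; rewrite gt_eqF.
rewrite ler_pM2r ?invr_gt0 //.
have Enm : (n - m + 1)%:R = n%:R - m%:R + 1 :> R by rewrite natrD natrB // ltnW.
rewrite Enm.
have hmn : m.+1%:R <= n%:R :> R by rewrite ler_nat.
have e0 : m.+1%:R = m%:R + 1 :> R by rewrite natr1.
case: k hk ypos => [|k] hk _.
  rewrite mul0r addr0; lra.
rewrite mulrDr mulrCA divff ?pnatr_eq0 // mulr1.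
have e1 : k.+2%:R = k.+1%:R + 1 :> R by rewrite natr1.
lra.
Qed.

Lemma arches_bound {R : realType} {A : finType} (k : nat)
  (IH : forall (B' : {set A}) n w, #|B'| = k -> overB B' w -> NP B' n w ->
        ((size w).+1%:R : R) <= bnd R k n)
  (B : {set A}) (hB : #|B| = k.+1) (n m : nat) (s : seq A) :
  forall rs X i, all (arch_ok B) rs -> univ B i X -> overB B X -> overB B s ->
  NP B n (X ++ flatten (map archw rs) ++ s) -> (i + size rs = m)%N -> (m < n)%N ->
  ((size (flatten (map archw rs)))%:R : R) <= (size rs)%:R * bnd R k (n - m + 1).
Proof.
elim=> [|[p b] rs IHrs] X i; first by move=> *; rewrite mul0r.
move=> /andP[hpb hrs] UX BX Bs NPW Hi Hmn.
have hpb' := hpb; case/and3P: hpb' => /= bB Bp _.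
set Y := flatten (map archw rs) ++ s.
have BY : overB B Y by rewrite overB_cat (overB_flat _ hrs).
have EW : X ++ flatten (map archw ((p, b) :: rs)) ++ s = X ++ (p ++ b :: Y).
  by rewrite /= /archw /= -catA cat_rcons.
have hpiece : ((size p).+1%:R : R) <= bnd R k (n - m + 1).
  apply: (IH (B :\ b)) => //.
    by move: hB; rewrite (cardsD1 b B) bB add1n => -[].
  move=> p' Bp' Hsim.
  have UY : univ B (size rs) (b :: Y).
    apply: univ_mono (univ_flat _ hrs) _.
    apply: subseq_trans (prefix_subseq _ s) (subseq_cons _ _).
  have BbY : overB B (b :: Y) by rewrite /= bB BY.
  have Bp1 : overB B p by exact: overB_sub (subsetDl B [set b]) Bp.
  have Bp1' : overB B p' by exact: overB_sub (subsetDl B [set b]) Bp'.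
  have H1 : simon_eq (n - i) (p ++ b :: Y) (p' ++ b :: Y).
    apply: (@flank_right _ B (size rs) (n - i) (b :: Y) p p' UY BbY Bp1 Bp1').
    by have -> : (n - i - size rs = n - m + 1)%N by rewrite /= in Hi; lia.
  have H2 : simon_eq n (X ++ (p ++ b :: Y)) (X ++ (p' ++ b :: Y)).
    apply: (@flank_left _ B i n X _ _ UX BX) => //; by rewrite overB_cat ?Bp1 ?Bp1' BbY.
  have := NPW (X ++ (p' ++ b :: Y)).
  rewrite EW => /(_ _ H2).
  rewrite !size_cat /=.
  have -> : overB B (X ++ p' ++ b :: Y) by rewrite !overB_cat BX Bp1' BbY.
  move=> /(_ isT); lia.
have hrest := IHrs (X ++ archw (p, b)) i.+1 hrs (univ_r UX (arch_sub _ hpb))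
  (ltac:(by rewrite overB_cat BX overB_arch)) Bs
  (ltac:(by move: NPW; rewrite /= -!catA)) (ltac:(by rewrite /= in Hi; lia)) Hmn.
rewrite /= size_cat natrD /archw size_rcons /=.
rewrite -[(size rs).+1]addn1 natrD mulrDl mul1r [X in _ <= X]addrC.
exact: (lerD hpiece hrest).
Qed.

Lemma main_bound {R : realType} {A : finType} (k : nat) :
  forall (B : {set A}) n w, #|B| = k -> overB B w -> NP B n w ->
  ((size w).+1%:R : R) <= bnd R k n.
Proof.
elim: k => [|k IHk] B n w hB Bw NPw.
  have B0 : B = finset.set0 by apply/eqP; rewrite -cards_eq0 hB.
  case: w Bw NPw => [|a w] /=; first by rewrite /bnd expr0.
  by rewrite B0 inE.
have [b0 b0B] : exists b0, b0 \in B.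
  have h : (0 < #|B|)%N by rewrite hB.
  by move: h; rewrite card_gt0 => /finset.set0Pn.
have [rs [s [c [Ew Ars cB Bs]]]] := decomp b0 w b0B Bw.
set m := size rs.
have BsB : overB B s by exact: overB_sub (subsetDl B [set c]) Bs.
have Bflat := overB_flat _ Ars.
have Uflat := univ_flat _ Ars.
case: (ltnP m n) => mn; last first.
  pose x := flatten (map archw (take n rs)).
  pose y := flatten (map archw (drop n rs)) ++ s.
  have Exy : w = x ++ y by rewrite Ew -{1}(cat_take_drop n rs) map_cat flatten_cat catA.
  have Atake : all (arch_ok B) (take n rs).
    by apply/allP => pb /mem_take; exact: (allP Ars).
  have Ux : univ B n x.
    by have := univ_flat _ Atake; rewrite size_takel.
  have Bw' : overB B (x ++ c :: y).
    by rewrite overB_cat /= cB; move: Bw; rewrite Exy overB_cat.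
  have Bxy : overB B (x ++ y) by rewrite -Exy.
  have := NPw _ Bw'; rewrite Exy => /(_ (univ_pump Ux Bxy Bw')).
  rewrite /y !size_cat /= => H; exfalso; rewrite ?size_cat in H; lia.
have h1 : ((size (flatten (map archw rs)))%:R : R) <= m%:R * bnd R k (n - m + 1).
  apply: (@arches_bound R A k IHk B hB n m s rs [::] 0 Ars (univ0 _) isT BsB) => //.
  by rewrite /= -Ew.
have h2 : ((size s).+1%:R : R) <= bnd R k (n - m + 1).
  apply: le_trans (_ : _ <= bnd R k (n - m)) _; last by rewrite addn1 bnd_mono.
  apply: (IHk (B :\ c)) => //.
    by move: hB; rewrite (cardsD1 c B) cB add1n => -[].
  move=> s' Bs' Hsim.
  have Bs'B : overB B s' by exact: overB_sub (subsetDl B [set c]) Bs'.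
  have H := @flank_left _ B m n _ s s' Uflat Bflat BsB Bs'B Hsim.
  have Bw2 : overB B (flatten (map archw rs) ++ s') by rewrite overB_cat Bflat Bs'B.
  have := NPw _ Bw2; rewrite Ew => /(_ H).
  rewrite !size_cat => H'; lia.
apply: le_trans (@bnd_step R k n m mn).
rewrite Ew size_cat -addnS natrD -[m.+1]addn1 natrD mulrDl mul1r.
exact: lerD h1 h2.
Qed.

Lemma min_exists (P : nat -> Prop) N : P N -> exists h, P h /\ forall m, P m -> (h <= m)%N.
Proof.
elim/ltn_ind: N => N IH PN.
case: (pselect (exists m, (m < N)%N /\ P m)) => [[m [mN Pm]] | H].
  exact: IH m mN Pm.
exists N; split=> // m Pm; rewrite leqNgt; apply/negP => mN; apply: H; by exists m.
Qed.


Lemma real_final {R : realType} (k h ell : nat) : (0 < k)%N ->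
  ((ell.+1)%:R : R) <= bnd R k h ->
  1 + k%:R * ((ell%:R : R) `^ (k%:R^-1) - 2) < h%:R.
Proof.
move=> kpos Hb.
have hk : (0 : R) < k%:R by rewrite ltr0n.
have c0 := base_ge0 (R := R) k h.
move: c0 Hb; rewrite /bnd; set c := (_ / _ + 2) => c0 Hb.
have Hlt : (ell%:R : R) < c ^+ k by apply: lt_le_trans Hb; rewrite ltr_nat.
set t := (ell%:R : R) `^ k%:R^-1.
have Ht : t < c.
  rewrite ltNge; apply/negP => Hc.
  have : c ^+ k <= t ^+ k by apply: lerXn2r; rewrite ?nnegrE ?powR_ge0.
  rewrite /t -powR_mulrn ?powR_ge0 // -powRrM mulVf ?gt_eqF // powRr1 ?ler0n //.
  by move=> H; move: (lt_le_trans Hlt H); rewrite ltxx.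
have Ec : k%:R * (c - 2) = h%:R - 1.
  by rewrite /c addrK mulrCA divff ?gt_eqF // mulr1.
have H2 : k%:R * (t - 2) < k%:R * (c - 2) by rewrite ltr_pM2l //; lra.
rewrite Ec in H2; lra.
Qed.

Local Close Scope ring_scope.

Lemma max_attained {A : finType} (Ls : seq (seq A)) : Ls != [::] ->
  exists2 w, w \in Ls & size w = \max_(w <- Ls) size w.
Proof.
elim: Ls => // a t IH _; rewrite big_cons.
case: t IH => [|b t] IH.
  by exists a; rewrite ?inE ?big_nil ?maxn0.
have [w wt <-] := IH isT.
case: (leqP (size a) (size w)) => H.
  by exists w; [rewrite inE wt orbT | rewrite ?(maxn_idPr H)].
by exists a; [rewrite inE eqxx | rewrite ?(maxn_idPl (ltnW H))].
Qed.

Theorem proposition7 (R : realType) (A : finType) (Ls : seq (seq A)) :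
  (0 < #|A|)%N -> Ls != [::] ->
  let k := #|A| in
  let ell := \max_(w <- Ls) size w in
  exists h : nat,
    is_PT_height (fun w : seq A => w \in Ls) h /\
    (1 + k%:R * ((ell%:R : R) `^ (k%:R^-1) - 2) < (h%:R : R))%R /\
    (h <= ell.+1)%N.
Proof.
move=> Apos Lne k ell.
have Hsz : forall w, w \in Ls -> size w <= ell.
  by move=> w hw; exact: (@leq_bigmax_seq _ Ls xpredT size w hw isT).
have [w0 w0L w0sz] := max_attained Ls Lne.
rewrite -/ell in w0sz; clearbody ell.
have PT : is_nPT ell.+1 (fun w : seq A => w \in Ls).
  have H : forall u v, simon_eq ell.+1 u v -> u \in Ls -> v \in Ls.
    move=> u v Huv Lu.
    have su := Hsz u Lu.
    have hv : size v <= ell.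
      have ht : size (take ell.+1 v) <= ell.+1 by rewrite size_take_min geq_minl.
      have Hs : subseq (take ell.+1 v) u by rewrite (Huv _ ht) take_subseq.
      have := seq.size_subseq Hs; rewrite size_take_min geq_min => /orP[h|h]; [by move: (leq_trans h su); rewrite ltnn | exact: leq_trans h su].
    have vu : subseq v u by rewrite (Huv v (leqW hv)).
    have uv : subseq u v by rewrite -(Huv u (leqW su)).
    have := @subseq_anti _ u v; rewrite uv vu => /(_ isT) <-; exact: Lu.
  move=> u v Huv; split; first exact: H.
  by apply: H; apply: simon_sym.
have [h [Hh Hmin]] := @min_exists (fun n => is_nPT n (fun w : seq A => w \in Ls)) _ PT.
exists h; split; first by split.
split; last exact: Hmin _ PT.
have NPh : NP [set: A] h w0.
  move=> w' _ Hs; have := (Hh w0 w' Hs).1 w0L => /Hsz; by rewrite w0sz.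
have Bw0 : overB [set: A] w0 by apply/allP => a _; rewrite finset.in_setT.
have Hb := @main_bound R A k [set: A] h w0 (cardsT A) Bw0 NPh.
rewrite w0sz in Hb.
exact: real_final Apos Hb.
Qed.
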